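(* In the infinite-color urn model with parameters $\ell,s$ and initial cumulative counts $m_1,\dots,m_s$, let $k\ge s$, $p=k-s+1$, and $n\ge \ell p$. Then $$M_k(n)\sim \mathrm{Pimm}_\ell\big(1,\;m_s+\ell p+(k-s),\;n-\ell p\big).$$ Furthermore, conditionally on $M_{k+1}(n)$, $$M_k(n)\sim\begin{cases}\mathrm{Pclas}\big(m_{k+1}-m_k,\;m_k,\;M_{k+1}(n)-m_{k+1}\big)&\text{if }1\le k<s,\\ \mathrm{Pclas}\big(1,\;m_s+\ell p+(k-s),\;M_{k+1}(n)-m_s-(\ell+1)p\big)&\text{if }k\ge s\ (\text{and } n\ge\ell p).\end{cases}$$
   Context: Infinite-color urn model: at time $0$ the urn contains balls of colors $1,\dots,s$ (at least one of each). Fix an integer $\ell\ge1$. At the $n$th step a ball is drawn uniformly at random and returned with one additional ball of the same color; if $n$ is a multiple of $\ell$, one ball of the new color $s+n/\ell$ is added after the $n$th draw. $M_k(n)$ is the number of balls with colors in $\{1,\dots,k\}$ after step $n$ is completed, and $m_k=M_k(0)$ (with $m_1\ge1$, $m_{k+1}-m_k\ge1$ for $k<s$). $\mathrm{Pclas}(b,w,m)$ denotes the distribution of the number of white balls in a classical Pólya urn (draw a uniformly random ball, return it with one more of the same color) after $m$ draws, starting with $b$ black and $w$ white balls. $\mathrm{Pimm}_\ell(b,w,m)$ denotes the distribution of the number of white balls after $m$ steps of the following urn started with $b$ black and $w$ white balls: at step $j$ a uniformly random ball is drawn and returned with one more of the same color, and if $j$ is a multiple of $\ell$ a black ball is added after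 this draw. *)

(* Defs.v *)
From HB Require Import structures.
From mathcomp Require Import all_boot all_order all_algebra.
Set Implicit Arguments. Unset Strict Implicit. Unset Printing Implicit Defensive.
Import Order.TTheory GRing.Theory Num.Theory.
Local Open Scope ring_scope.

(* A state of the infinite-color urn: the list of ball counts of colors 1,2,...
   (color i+1 at index i). *)

(* Initial state built from the cumulative counts m_1..m_s (m_0 := 0). *)
Definition urn_init (m : nat -> nat) (s : nat) : seq nat :=
  mkseq (fun i => (m i.+1 - (if i == 0%N then 0 else m i))%N) s.

(* State after the draw at step t+1 picked color i+1: add one ball of that color,
   and if t+1 is a multiple of l, add one ball of a new color. *)
Definition urn_next (l t : nat) (st : seq nat) (i : nat) : seq nat :=
  let st' := incr_nth st i in if (l %| t.+1)%N then rcons st' 1%N else st'.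

(* urnE l t n st f = expectation of f(state after n further steps), starting from
   state st after t steps have been completed. *)
Fixpoint urnE (l t n : nat) (st : seq nat) (f : seq nat -> rat) : rat :=
  match n with
  | 0%N => f st
  | n'.+1 => \sum_(i < size st)
        ((nth 0%N st i)%:R / (sumn st)%:R) * urnE l t.+1 n' (urn_next l t st i) f
  end.

Definition urnP (l : nat) (m : nat -> nat) (s n : nat) (P : pred (seq nat)) : rat :=
  urnE l 0 n (urn_init m s) (fun st => (P st)%:R).

Definition Mk (k : nat) (st : seq nat) : nat := sumn (take k st).

(* Pclas(b,w,m): probability that the classical Polya urn started with b black and
   w white balls has a white balls after m draws. *)
Fixpoint pclas (b w m a : nat) : rat :=
  match m with
  | 0%N => (w == a)%:R
  | m'.+1 => (w%:R / (b + w)%:R) * pclas b w.+1 m' a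
             + (b%:R / (b + w)%:R) * pclas b.+1 w m' a
  end.

(* Immigration urn: j = number of steps already performed; after step j+1,
   if l divides j+1, one black ball is added. *)
Fixpoint pimm_aux (l j b w m a : nat) : rat :=
  match m with
  | 0%N => (w == a)%:R
  | m'.+1 =>
      let e := if (l %| j.+1)%N then 1%N else 0%N in
      (w%:R / (b + w)%:R) * pimm_aux l j.+1 (b + e) w.+1 m' a
      + (b%:R / (b + w)%:R) * pimm_aux l j.+1 (b.+1 + e) w m' a
  end.

Definition pimm (l b w m a : nat) : rat := pimm_aux l 0 b w m a.

(* Main.v *)
Require Import Defs.
From mathcomp Require Import all_boot all_order all_algebra.
From mathcomp Require Import zify ring.
Import GRing.Theory Num.Theory.
Local Open Scope ring_scope.

Lemma sum_nth_take (s : seq nat) k :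
  (\sum_(0 <= i < k) nth 0%N s i)%N = sumn (take k s).
Proof.
elim: s k => [|x s IH] k.
  by rewrite big1_seq //= => i _; rewrite nth_nil.
case: k => [|k]; first by rewrite big_geq.
by rewrite big_nat_recl //= IH.
Qed.

Lemma Mk_mono k1 k2 st : (k1 <= k2)%N -> (Mk k1 st <= Mk k2 st)%N.
Proof.
move=> h; rewrite /Mk -!sum_nth_take (@big_cat_nat _ _ _ k1 0 k2 _ _ (leq0n k1) h) /=.
exact: leq_addr.
Qed.

Lemma take_incr_nth (st : seq nat) i k : (i < size st)%N ->
  sumn (take k (incr_nth st i)) = (sumn (take k st) + (i < k))%N.
Proof.
elim: st i k => [|x st IH] i k //= hi.
case: k => [|k]; first by case: i hi => [|i] //=; rewrite addn0.
case: i hi => [|i] hi /=; first lia.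
rewrite IH //; lia.
Qed.

Lemma size_urn_next l t st i : (i < size st)%N ->
  size (urn_next l t st i) = (size st + (l %| t.+1))%N.
Proof.
move=> hi; rewrite /urn_next; case: ifP => _; rewrite ?size_rcons size_incr_nth hi //.
by rewrite addn1. by rewrite addn0.
Qed.

Lemma Mk_rcons k x st : (k <= size st)%N -> Mk k (rcons st x) = Mk k st.
Proof. by move=> h; rewrite /Mk -cats1 takel_cat. Qed.

Lemma Mk_urn_next l t st i k : (i < size st)%N -> (k <= size st)%N ->
  Mk k (urn_next l t st i) = (Mk k st + (i < k))%N.
Proof.
move=> hi hk; rewrite /urn_next; case: ifP => _.
  rewrite Mk_rcons; last by rewrite size_incr_nth hi.
  exact: take_incr_nth.
exact: take_incr_nth.
Qed.

Lemma sumn_rcons st x : sumn (rcons st x) = (sumn st + x)%N.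
Proof. by rewrite -cats1 sumn_cat /= addn0. Qed.

Lemma sumn_urn_next l t st i : (i < size st)%N ->
  sumn (urn_next l t st i) = (sumn st + 1 + (if l %| t.+1 then 1 else 0))%N.
Proof.
move=> hi.
have hs : sumn (incr_nth st i) = (sumn st + 1)%N.
  have := @take_incr_nth st i (size st) hi.
  rewrite take_size take_oversize ?hi //.
  by rewrite size_incr_nth hi.
rewrite /urn_next; case: ifP => _; rewrite ?sumn_rcons hs //; lia.
Qed.

Lemma urnE_split l t a b st f :
  urnE l t (a + b) st f = urnE l t a st (fun st' => urnE l (t + a) b st' f).
Proof.
elim: a t st => [|a IH] t st /=; first by rewrite addn0.
apply: eq_bigr => i _; by rewrite IH addSnnS.
Qed.

Lemma urnE_inv l (Inv : nat -> seq nat -> Prop)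
  (hInv : forall t st i, Inv t st -> (i < size st)%N -> Inv t.+1 (urn_next l t st i)) :
  forall n t st f g, Inv t st -> (forall st', Inv (t + n)%N st' -> f st' = g st') ->
  urnE l t n st f = urnE l t n st g.
Proof.
elim=> [|n IH] t st f g hI hfg /=; first by apply: hfg; rewrite addn0.
apply: eq_bigr => i _; congr (_ * _); apply: IH; first exact: hInv.
by move=> st' h; apply: hfg; rewrite -addSnnS.
Qed.

Lemma urnE_ext l n t st f g : (forall st', f st' = g st') ->
  urnE l t n st f = urnE l t n st g.
Proof.
move=> h; apply: (@urnE_inv l (fun _ _ => True)) => //.
Qed.

Lemma sum_nth_ord (st : seq nat) :
  (\sum_(i < size st) nth 0%N st i)%N = sumn st.
Proof. by rewrite -(big_mkord xpredT) sum_nth_take take_size. Qed.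

Lemma urnE_const l n t st c : (0 < sumn st)%N -> urnE l t n st (fun _ => c) = c.
Proof.
elim: n t st => [|n IH] t st hs //=.
rewrite (eq_bigr (fun i : 'I_(size st) => (nth 0%N st i)%:R / (sumn st)%:R * c)); last first.
  move=> i _; rewrite IH // sumn_urn_next //; lia.
rewrite -big_distrl -mulr_suml /= -natr_sum sum_nth_ord divff ?mul1r //.
by rewrite pnatr_eq0 -lt0n.
Qed.

Fixpoint gimm (l j b w n : nat) (F : nat -> nat -> rat) : rat :=
  match n with
  | 0%N => F b w
  | n'.+1 =>
      let e := if (l %| j.+1)%N then 1%N else 0%N in
      (w%:R / (b + w)%:R) * gimm l j.+1 (b + e) w.+1 n' F
      + (b%:R / (b + w)%:R) * gimm l j.+1 (b.+1 + e) w n' F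
  end.

Fixpoint gen3 (l j W B R n : nat) (F : nat -> nat -> nat -> rat) : rat :=
  match n with
  | 0%N => F W B R
  | n'.+1 =>
      let e := if (l %| j.+1)%N then 1%N else 0%N in
      let S := (W + B + R)%N in
      (W%:R / S%:R) * gen3 l j.+1 W.+1 B (R + e) n' F
      + (B%:R / S%:R) * gen3 l j.+1 W B.+1 (R + e) n' F
      + (R%:R / S%:R) * gen3 l j.+1 W B (R.+1 + e) n' F
  end.

Lemma pimm_gimm l j b w n a :
  pimm_aux l j b w n a = gimm l j b w n (fun _ w => (w == a)%:R).
Proof. by elim: n j b w => [|n IH] j b w //=; rewrite !IH. Qed.

Lemma gimm_shift l j b w n F : gimm l (j + l) b w n F = gimm l j b w n F.
Proof.
elim: n j b w => [|n IH] j b w //=.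
have -> : (l %| (j + l).+1)%N = (l %| j.+1)%N by rewrite -addSn dvdn_addl.
by rewrite -!addSn !IH.
Qed.

Lemma gimm_shiftM l p b w n F : gimm l (l * p) b w n F = gimm l 0 b w n F.
Proof.
elim: p => [|p IH]; first by rewrite muln0.
by rewrite mulnS addnC gimm_shift.
Qed.

Lemma gen3_sum l n j W B R G :
  gen3 l j W B R n (fun w b r => G (w + b)%N r) = gimm l j R (W + B) n (fun r c => G c r).
Proof.
elim: n j W B R => [|n IH] j W B R //=.
rewrite !IH addSn addnS.
set e := (if _ then _ else _).
set X := gimm _ _ _ _ _ _; set Y := gimm _ _ _ _ _ _.
have -> : (R + (W + B))%N = (W + B + R)%N by rewrite addnC.
rewrite natrD; ring.
Qed.

Lemma gimm_zero l c n j R w : (c < w)%N ->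
  gimm l j R w n (fun _ x => (x == c)%:R) = 0.
Proof.
elim: n j R w => [|n IH] j R w h /=.
  by case: eqP => // ?; subst; rewrite ltnn in h.
rewrite !IH //; [by rewrite !mulr0 addr0 | exact: ltnW].
Qed.

Lemma alg_id (W B S Q P1 P2 : rat) : W + B != 0 ->
  W / S * Q * P1 + B / S * Q * P2 = (W / S * Q + B / S * Q) * (W / (B + W) * P1 + B / (B + W) * P2).
Proof.
move=> h; have [->|hS] := eqVneq S 0; first by rewrite invr0 !mulr0 !mul0r !addr0 ?mul0r.
rewrite [B + W]addrC; field; by rewrite ?h ?hS.
Qed.

Lemma gen3_cond l a c n j W B R :
  gen3 l j W B R n (fun w b r => ((w == a) && ((w + b)%N == c))%:R)
  = gen3 l j W B R n (fun w b r => ((w + b)%N == c)%:R) * pclas B W (c - (W + B)) a.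
Proof.
elim: n j W B R => [|n IH] j W B R /=.
  case: (eqVneq (W + B)%N c) => [<-|ne].
    by rewrite subnn /= andbT mul1r.
  by rewrite andbF mul0r.
rewrite !IH.
rewrite !(gen3_sum _ _ _ _ _ _ (fun x _ => (x == c)%:R)) /= addSn addnS.
set e := (if _ then _ else _).
set Q := gimm _ _ _ (W + B).+1 _ _.
set Q3 := gimm _ _ _ (W + B)%N _ _.
have [hc|hc] := leqP c (W + B).
  have -> : Q = 0 by rewrite /Q gimm_zero.
  rewrite !mul0r !mulr0 !add0r; ring.
have -> : (c - (W + B))%N = (c - (W + B).+1).+1 by lia.
rewrite [pclas B W _ _]/=.
set P1 := pclas _ _ _ _; set P2 := pclas _ _ _ _.
have [hz|hz] := eqVneq (W + B)%N 0%N.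
  have [-> ->] : W = 0%N /\ B = 0%N by lia.
  rewrite !mul0r; ring.
have hne : W%:R + B%:R != 0 :> rat by rewrite -natrD pnatr_eq0.
have H := alg_id W%:R B%:R (W+B+R)%:R Q P1 P2 hne.
rewrite !natrD in H *; rewrite mulrDl -H; ring.
Qed.

Lemma sum_range (st : seq nat) (m n : nat) (X : rat) :
  \sum_(m <= i < n) (nth 0%N st i)%:R / (sumn st)%:R * X
  = (\sum_(m <= i < n) nth 0%N st i)%N%:R / (sumn st)%:R * X.
Proof. by rewrite -big_distrl -mulr_suml natr_sum. Qed.

Lemma proj3 l n t st k1 k2 F : (k1 <= k2)%N -> (k2 <= size st)%N ->
  urnE l t n st (fun st' => F (Mk k1 st') (Mk k2 st' - Mk k1 st')%N (sumn st' - Mk k2 st')%N)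
  = gen3 l t (Mk k1 st) (Mk k2 st - Mk k1 st) (sumn st - Mk k2 st) n F.
Proof.
move=> h12; elim: n t st => [|n IH] t st h2 //=.
set W := Mk k1 st; set C := Mk k2 st; set S := sumn st.
set e := (if _ then _ else _).
have hWC : (W <= C)%N by apply: Mk_mono.
have hCS : (C <= S)%N.
  by rewrite /C /S /Mk -{2}(take_size st); apply: Mk_mono.
pose H (x y : bool) := gen3 l t.+1 (W + x) (C + y - (W + x)) (S.+1 + e - (C + y)) n F.
have -> : \sum_(i < size st) (nth 0%N st i)%:R / (sumn st)%:R *
     urnE l t.+1 n (urn_next l t st i)
       (fun st' => F (Mk k1 st') (Mk k2 st' - Mk k1 st')%N (sumn st' - Mk k2 st')%N)
   = \sum_(0 <= i < size st) (nth 0%N st i)%:R / S%:R * H (i < k1)%N (i < k2)%N.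
  rewrite big_mkord; apply: eq_bigr => i _.
  have hi := ltn_ord i.
  rewrite IH; last by rewrite size_urn_next //; lia.
  rewrite /H !Mk_urn_next //; try lia.
  by rewrite sumn_urn_next // -/e -/W -/C -/S addn1.
rewrite (@big_cat_nat _ _ _ k1) //=; last by lia.
rewrite (@big_cat_nat _ _ _ k2 k1) //=.
rewrite (@eq_big_nat _ _ _ 0 k1 _ (fun i => (nth 0%N st i)%:R / S%:R * H true true)); last first.
  move=> i /andP [_ hi]; have -> : (i < k1)%N = true by lia. by have -> : (i < k2)%N = true by lia.
rewrite (@eq_big_nat _ _ _ k1 k2 _ (fun i => (nth 0%N st i)%:R / S%:R * H false true)); last first.
  move=> i /andP [h1 hi]; have -> : (i < k1)%N = false by lia. by have -> : (i < k2)%N = true by lia.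
rewrite (@eq_big_nat _ _ _ k2 (size st) _ (fun i => (nth 0%N st i)%:R / S%:R * H false false)); last first.
  move=> i /andP [h1 hi]; have -> : (i < k1)%N = false by lia. by have -> : (i < k2)%N = false by lia.
rewrite !sum_range.
have s1 : (\sum_(0 <= i < k1) nth 0%N st i)%N = W by rewrite sum_nth_take.
have s12 : (\sum_(0 <= i < k2) nth 0%N st i)%N = C by rewrite sum_nth_take.
rewrite (@big_cat_nat _ _ _ k1) //= s1 in s12.
have s3 : (\sum_(0 <= i < size st) nth 0%N st i)%N = S by rewrite sum_nth_take take_size.
rewrite (@big_cat_nat _ _ _ k2) //= (@big_cat_nat _ _ _ k1 0 k2) //= s1 in s3.
have -> : (\sum_(k1 <= i < k2) nth 0%N st i)%N = (C - W)%N by lia.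
have -> : (\sum_(k2 <= i < size st) nth 0%N st i)%N = (S - C)%N by lia.
rewrite s1 /H /=.
have -> : (W + (C - W) + (S - C))%N = S by lia.
have -> : (C + 1 - (W + 1))%N = (C - W)%N by lia.
have -> : (S.+1 + e - (C + 1))%N = (S - C + e)%N by lia.
have -> : (C + 1 - (W + 0))%N = (C - W).+1%N by lia.
have -> : (S.+1 + e - (C + 0))%N = (S - C).+1 + e by lia.
rewrite !addn0 !addn1 addrA //.
Qed.

Definition Inv (l s : nat) (m : nat -> nat) (t : nat) (st : seq nat) : Prop :=
  size st = (s + t %/ l)%N /\ sumn st = (m s + t + t %/ l)%N /\
  ((0 < t)%N -> (l %| t)%N -> exists st', st = rcons st' 1%N).

Lemma Inv_next l s m : (0 < l)%N -> forall t st i, Inv l s m t st -> (i < size st)%N ->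
  Inv l s m t.+1 (urn_next l t st i).
Proof.
move=> hl t st i [h1 [h2 _]] hi; split; last split.
- by rewrite size_urn_next // h1 divnS //; lia.
- rewrite sumn_urn_next // h2 divnS //; case: (l %| t.+1)%N; lia.
- move=> _ hd; rewrite /urn_next hd; by eexists.
Qed.

Lemma nth_init m s i : (i < s)%N ->
  nth 0%N (urn_init m s) i = (m i.+1 - (if i == 0%N then 0 else m i))%N.
Proof. by move=> h; rewrite nth_mkseq. Qed.

Lemma Mk_init (s : nat) (m : nat -> nat)
  (hm : forall k : nat, (1 <= k)%N -> (k < s)%N -> (m k < m k.+1)%N) k :
  (1 <= k)%N -> (k <= s)%N -> Mk k (urn_init m s) = m k.
Proof.
rewrite /Mk -sum_nth_take.
elim: k => [|k IH] // _ hk.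
rewrite big_nat_recr //= nth_init //.
case: k IH hk => [|k] IH hk; first by rewrite big_geq /=; lia.
rewrite IH //; last by lia.
have := hm k.+1 erefl hk; simpl; lia.
Qed.

Lemma sumn_init (s : nat) (m : nat -> nat) (hs : (1 <= s)%N)
  (hm : forall k : nat, (1 <= k)%N -> (k < s)%N -> (m k < m k.+1)%N) :
  sumn (urn_init m s) = m s.
Proof.
rewrite -(@Mk_init s m hm s hs (leqnn s)) /Mk take_oversize //.
by rewrite size_mkseq.
Qed.

Lemma after_lp l s m (hl : (1 <= l)%N) (hs : (1 <= s)%N) (hm1 : (1 <= m 1%N)%N)
  (hm : forall k : nat, (1 <= k)%N -> (k < s)%N -> (m k < m k.+1)%N) T r f c :
  (forall st, Inv l s m T st -> urnE l T r st f = c) ->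
  urnE l 0 (T + r) (urn_init m s) f = c.
Proof.
move=> H; rewrite urnE_split add0n.
have hpos : (0 < m s)%N.
  have gen : forall j, (1 <= j)%N -> (j <= s)%N -> (0 < m j)%N.
    elim=> [|j IH] // _ hj.
    case: j IH hj => [|j] IH hj //.
    have := hm j.+1 erefl hj; have := IH erefl (ltnW hj); lia.
  exact: gen.
rewrite (@urnE_inv l (Inv l s m) (@Inv_next l s m hl) T 0 _ _ (fun _ => c)).
- by apply: urnE_const; rewrite sumn_init.
- split; last split; rewrite ?size_mkseq ?div0n ?addn0 ?sumn_init //.
- by move=> st; rewrite add0n; apply: H.
Qed.

Lemma Inv_lp l s m k st : (1 <= l)%N -> (s <= k)%N -> Inv l s m (l * (k - s + 1)) st ->
  [/\ size st = k.+1, Mk k st = (m s + l * (k - s + 1) + (k - s))%N,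
      Mk k.+1 st = (m s + l * (k - s + 1) + (k - s) + 1)%N & sumn st = Mk k.+1 st].
Proof.
move=> hl hk [h1 [h2 h3]].
rewrite mulKn // in h1 h2.
have [st' Est] : exists st', st = rcons st' 1%N.
  apply: h3; last exact: dvdn_mulr.
  by rewrite muln_gt0 hl; lia.
subst st; rewrite size_rcons in h1; rewrite sumn_rcons in h2.
have hs' : size st' = k by lia.
rewrite Mk_rcons ?hs' // /Mk take_oversize ?hs' //.
rewrite take_oversize ?size_rcons ?hs' // sumn_rcons.
split => //; lia.
Qed.

Theorem lemma3p1 (l s : nat) (m : nat -> nat)
  (hl : (1 <= l)%N) (hs : (1 <= s)%N)
  (hm1 : (1 <= m 1%N)%N)
  (hm : forall k : nat, (1 <= k)%N -> (k < s)%N -> (m k < m k.+1)%N) :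
  (* unconditional law for k >= s *)
  (forall k n : nat, (s <= k)%N -> (l * (k - s + 1) <= n)%N ->
     forall a : nat,
       urnP l m s n (fun st => Mk k st == a)
       = pimm l 1 (m s + l * (k - s + 1) + (k - s)) (n - l * (k - s + 1)) a)
  /\
  (* conditional law given M_{k+1}(n), case 1 <= k < s *)
  (forall k n : nat, (1 <= k)%N -> (k < s)%N ->
     forall a b : nat,
       urnP l m s n (fun st => (Mk k st == a) && (Mk k.+1 st == b))
       = urnP l m s n (fun st => Mk k.+1 st == b)
         * pclas (m k.+1 - m k) (m k) (b - m k.+1) a)
  /\
  (* conditional law given M_{k+1}(n), case k >= s and n >= l p *)
  (forall k n : nat, (s <= k)%N -> (l * (k - s + 1) <= n)%N ->
     forall a b : nat,
       urnP l m s n (fun st => (Mk k st == a) && (Mk k.+1 st == b))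
       = urnP l m s n (fun st => Mk k.+1 st == b)
         * pclas 1 (m s + l * (k - s + 1) + (k - s))
                 (b - m s - (l + 1) * (k - s + 1)) a).
Proof.
split; last split.
- move=> k n hk hn a; rewrite /urnP -(subnKC hn).
  apply: (@after_lp l s m hl hs hm1 hm) => st hI.
  have [hsz hW hC hS] := @Inv_lp l s m k st hl hk hI.
  rewrite (@urnE_ext l _ _ _ _ (fun st' => (fun w b r => ((w + b)%N == a)%:R)
      (Mk k st') (Mk k st' - Mk k st')%N (sumn st' - Mk k st')%N)); last first.
    by move=> st'; rewrite subnn addn0.
  rewrite (proj3 _ _ _ _ k k (fun w b r => ((w + b)%N == a)%:R)) ?hsz //.
  rewrite (gen3_sum _ _ _ _ _ _ (fun x _ => (x == a)%:R)) /=.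
  rewrite subnn addn0 hS hC hW.
  have -> : (m s + l * (k - s + 1) + (k - s) + 1 - (m s + l * (k - s + 1) + (k - s)))%N = 1%N by lia.
  by rewrite gimm_shiftM /pimm pimm_gimm addKn.
- move=> k n hk1 hks a b; rewrite /urnP.
  have hsz : (k.+1 <= size (urn_init m s))%N by rewrite size_mkseq.
  rewrite (@urnE_ext l _ _ _ _ (fun st' => (fun w b' r => ((w == a) && ((w + b')%N == b))%:R)
      (Mk k st') (Mk k.+1 st' - Mk k st')%N (sumn st' - Mk k.+1 st')%N)); last first.
    by move=> st'; rewrite subnKC // Mk_mono.
  rewrite (@urnE_ext l _ _ _ (fun st => (Mk k.+1 st == b)%:R) (fun st' => (fun w b' r => (((w + b')%N == b))%:R)
      (Mk k st') (Mk k.+1 st' - Mk k st')%N (sumn st' - Mk k.+1 st')%N)); last first.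
    by move=> st'; rewrite subnKC // Mk_mono.
  rewrite (proj3 _ _ _ _ k k.+1 (fun w b' r => ((w == a) && ((w + b')%N == b))%:R)) // (proj3 _ _ _ _ k k.+1 (fun w b' r => (((w + b')%N == b))%:R)) // gen3_cond (@Mk_init s m hm k) //.
  have e1 : Mk k.+1 (urn_init m s) = m k.+1 by apply: (@Mk_init s m hm k.+1).
  rewrite e1; have := hm k hk1 hks => hlt.
  rewrite subnKC //; try exact: ltnW.
  all: try lia.
- move=> k n hk hn a b; rewrite /urnP -(subnKC hn).
  set p := (k - s + 1)%N.
  set W := (m s + l * p + (k - s))%N.
  rewrite (@after_lp l s m hl hs hm1 hm _ _ _ (gen3 l (l * p) W 1 0 (n - l * p)
            (fun w b' r => ((w == a) && ((w + b')%N == b))%:R))); last first.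
    move=> st hI; have [hsz hW hC hS] := @Inv_lp l s m k st hl hk hI.
    rewrite (@urnE_ext l _ _ _ _ (fun st' => (fun w b' r => ((w == a) && ((w + b')%N == b))%:R)
      (Mk k st') (Mk k.+1 st' - Mk k st')%N (sumn st' - Mk k.+1 st')%N)); last first.
      by move=> st'; rewrite subnKC // Mk_mono.
    rewrite (proj3 _ _ _ _ k k.+1 (fun w b' r => ((w == a) && ((w + b')%N == b))%:R)) ?hsz // hS subnn hC hW -/p -/W.
    by have -> : (W + 1 - W)%N = 1%N by lia.
  rewrite (@after_lp l s m hl hs hm1 hm _ _ _ (gen3 l (l * p) W 1 0 (n - l * p)
            (fun w b' r => (((w + b')%N == b))%:R))); last first.
    move=> st hI; have [hsz hW hC hS] := @Inv_lp l s m k st hl hk hI.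
    rewrite (@urnE_ext l _ _ _ (fun st => (Mk k.+1 st == b)%:R) (fun st' => (fun w b' r => (((w + b')%N == b))%:R)
      (Mk k st') (Mk k.+1 st' - Mk k st')%N (sumn st' - Mk k.+1 st')%N)); last first.
      by move=> st'; rewrite subnKC // Mk_mono.
    rewrite (proj3 _ _ _ _ k k.+1 (fun w b' r => (((w + b')%N == b))%:R)) ?hsz // hS subnn hC hW -/p -/W.
    by have -> : (W + 1 - W)%N = 1%N by lia.
  rewrite gen3_cond.
  by have -> : (b - (W + 1))%N = (b - m s - (l + 1) * p)%N by rewrite /W; lia.
Qed.
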